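(* Let $\lambda>0$, $f:\mathbb{R}^n\to\mathbb{R}$ twice continuously differentiable, $\varphi=f+\lambda\|\cdot\|_1$, and $x^0$ with $\mathcal{L}_\varphi(x^0)$ bounded and $f$ twice uniformly Lipschitz continuously differentiable on an open neighborhood of it; assume $\varphi$ has a minimizer. Let $\{x^k\}$ be generated by FPGN2CM (described in the context). Then there exists $K\in\mathbb{N}$ such that the Newton-CG step is invoked for all $k\ge K$.
   Context: $\mathcal{G}_t(x):=t(x-\mathrm{prox}_{\frac\lambda t\|\cdot\|_1}(x-\frac1t\nabla f(x)))$; $\mathrm{sgn}(0)=1$. For $x$: $I^\varepsilon_0=\{i:|x_i|\le\varepsilon_g^{1/2}\}$, $I^\varepsilon_{\neq0}=\{i:|x_i|>\varepsilon_g^{1/2}\}$; $g^\varepsilon(x)_i=(\nabla f(x))_i+\lambda$ if $x_i>\varepsilon_g^{1/2}$, $(\nabla f(x))_i-\lambda$ if $x_i<-\varepsilon_g^{1/2}$, $(\nabla f(x))_i-\min\{\max\{-\lambda-\varepsilon_g^{3/4},(\nabla f(x))_i\},\lambda+\varepsilon_g^{3/4}\}$ otherwise. Capped CG (inputs symmetric $H$, $g$, $\epsilon$, $\zeta\in(0,1)$, $\delta$, $\bar\tau$, $M\ge0$): $\bar H=H+\bar\tau\|g\|^\delta I$, $\kappa=\frac{M+\bar\tau\|g\|^\delta}\epsilon$, $\hat\zeta=\frac\zeta{3\kappa}$, $\tau=\frac{\sqrt\kappa}{\sqrt\kappa+1}$, $T=\frac{4\kappa^4}{(1-\sqrt\tau)^2}$,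 $y_0=0,r_0=g,p_0=-g$; if $p_0^\top\bar Hp_0<\epsilon\|p_0\|^2$ return $(p_0,\mathrm{NC})$; if $\|Hp_0\|>M\|p_0\|$ update $M$ and $\kappa,\hat\zeta,\tau,T$. Loop: standard CG iteration on $\bar Hy=-g$ ($\alpha_j=\|r_j\|^2/p_j^\top\bar Hp_j$, $y_{j+1}=y_j+\alpha_jp_j$, $r_{j+1}=r_j+\alpha_j\bar Hp_j$, $\beta_{j+1}=\|r_{j+1}\|^2/\|r_j\|^2$, $p_{j+1}=-r_{j+1}+\beta_{j+1}p_j$, $j\leftarrow j+1$), updating $M$ whenever $\|Hv\|>M\|v\|$ for $v\in\{p_j,y_j,r_j\}$; then if $y_j^\top\bar Hy_j<\epsilon\|y_j\|^2$ return $(y_j,\mathrm{NC})$; elif $\|r_j\|\le\hat\zeta\|r_0\|$ return $(y_j,\mathrm{SOL})$; elif $p_j^\top\bar Hp_j<\epsilon\|p_j\|^2$ return $(p_j,\mathrm{NC})$; elif $\|r_j\|>\sqrt T\tau^{j/2}\|r_0\|$, compute $y_{j+1}$, find $i<j$ with $(y_{j+1}-y_i)^\top\bar H(y_{j+1}-y_i)<\epsilon\|y_{j+1}-y_i\|^2$ and return $(y_{j+1}-y_i,\mathrm{NC})$. FPGN2CM (parameters $0<\varepsilon_g<1$, $\varepsilon_h=\varepsilon_g^{1/2}$, $\beta>1$, $\delta\in[0,1]$, $\hat\tau\ge1$, $\zeta\in(0,1)$, $\bar\eta\in(0,1)$, $\eta\in(0,\frac{1-\zeta}2)$, $\theta\in(0,1)$),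 at iteration $k$ with $I^{k\varepsilon}_0=I^\varepsilon_0(x^k)$, $I^{k\varepsilon}_{\neq0}=I^\varepsilon_{\neq0}(x^k)$: (a) proximal gradient step: if $I^{k\varepsilon}_0\neq\emptyset$ and $g^\varepsilon(x^k)_i\neq0$ for some $i\in I^{k\varepsilon}_0$, set $x^{k+1}=\mathrm{prox}_{\frac\lambda{\beta^{j_k}}\|\cdot\|_1}(x^k-\beta^{-j_k}\nabla f(x^k))$ with $j_k$ the smallest nonnegative $j$ such that $\varphi(\mathrm{prox}_{\frac\lambda{\beta^j}\|\cdot\|_1}(x^k-\beta^{-j}\nabla f(x^k)))<\varphi(x^k)-\frac{\bar\eta}{\beta^j}\|\mathcal{G}_{\beta^j}(x^k)\|^2$; (b) Newton-CG step: else if $I^{k\varepsilon}_{\neq0}\neq\emptyset$ and $\|g^\varepsilon(x^k)_{I^{k\varepsilon}_{\neq0}}\|\neq0$: with $H=(\nabla^2f(x^k))_{I^{k\varepsilon}_{\neq0}}$, $g=g^\varepsilon(x^k)_{I^{k\varepsilon}_{\neq0}}$, $\tau_k\in[\frac{2\varepsilon_h}{\|g\|^\delta},\frac{2\hat\tau\varepsilon_h}{\|g\|^\delta}]$, call Capped CG$(H,g,\varepsilon_h,\zeta,\delta,\tau_k,M)$ to get $(d,d_{\rm type})$; $d^k=0$ on $I^{k\varepsilon}_0$, and on $I^{k\varepsilon}_{\neq0}$ equals $-\mathrm{sgn}(d^\top g)\frac{|d^\top Hd|}{\|d\|^2}\frac d{\|d\|}$ if NC, $d$ if SOL; $x^{k+1}=x^k+\theta^{j_k}d^k$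 with $j_k$ the smallest nonnegative $j$ such that $\varphi(x^k+\theta^jd^k)<\varphi(x^k)-\eta\theta^{2j}\varepsilon_h\|d^k\|^2$. (No second-order phase is performed.) *)

(* Defs.v *)
From mathcomp Require Import all_boot all_order all_algebra.
From mathcomp Require Import all_classical all_reals all_analysis.
Import Order.TTheory GRing.Theory Num.Theory.
Import numFieldNormedType.Exports.
Set Implicit Arguments. Unset Strict Implicit. Unset Printing Implicit Defensive.
Local Open Scope ring_scope.
Local Open Scope classical_set_scope.

Section FPGN2CM.
Variable R : realType.

Definition dotv m (u v : 'cV[R]_m) : R := \sum_i u i 0 * v i 0.
Definition norm2 m (v : 'cV[R]_m) : R := Num.sqrt (\sum_i v i 0 ^+ 2).
Definition norm1 m (v : 'cV[R]_m) : R := \sum_i `|v i 0|.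
Definition sgn (r : R) : R := if 0 <= r then 1 else -1.

Definition gradf n (f : 'cV[R]_n -> R) (x : 'cV[R]_n) : 'cV[R]_n :=
  \col_i ('d f x (delta_mx i 0 : 'cV[R]_n)).
Definition hessf n (f : 'cV[R]_n -> R) (x : 'cV[R]_n) : 'M[R]_n :=
  \matrix_(i, j) ('d (gradf f) x (delta_mx j 0 : 'cV[R]_n)) i 0.

Definition is_prox_l1 n (c : R) (z u : 'cV[R]_n) : Prop :=
  forall w : 'cV[R]_n,
    c * norm1 u + (norm2 (u - z)) ^+ 2 / 2 <= c * norm1 w + (norm2 (w - z)) ^+ 2 / 2.
Definition prox_l1 n (c : R) (z : 'cV[R]_n) : 'cV[R]_n :=
  xget 0 [set u | is_prox_l1 c z u].

Section CappedCG.
Variables (m : nat) (H : 'M[R]_m) (g : 'cV[R]_m)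
  (eps zeta delta taubar M0 : R).

Definition ccg_Hbar : 'M[R]_m := H + (taubar * powR (norm2 g) delta)%:M.
Definition ccg_kappa (M : R) : R := (M + taubar * powR (norm2 g) delta) / eps.
Definition ccg_zhat (M : R) : R := zeta / (3 * ccg_kappa M).
Definition ccg_tau (M : R) : R :=
  Num.sqrt (ccg_kappa M) / (Num.sqrt (ccg_kappa M) + 1).
Definition ccg_T (M : R) : R :=
  4 * ccg_kappa M ^+ 4 / (1 - Num.sqrt (ccg_tau M)) ^+ 2.
Definition ccg_updM (M : R) (v : 'cV[R]_m) : R :=
  if norm2 (H *m v) > M * norm2 v then norm2 (H *m v) / norm2 v else M.
Definition ccg_negc (v : 'cV[R]_m) : bool :=
  dotv v (ccg_Hbar *m v) < eps * norm2 v ^+ 2.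

Definition ccg_state := ('cV[R]_m * 'cV[R]_m * 'cV[R]_m * R)%type.
Definition st_y (s : ccg_state) := s.1.1.1.
Definition st_r (s : ccg_state) := s.1.1.2.
Definition st_p (s : ccg_state) := s.1.2.
Definition st_M (s : ccg_state) := s.2.

Definition ccg_alpha (s : ccg_state) : R :=
  norm2 (st_r s) ^+ 2 / dotv (st_p s) (ccg_Hbar *m st_p s).
Definition ccg_ynext (s : ccg_state) : 'cV[R]_m :=
  st_y s + ccg_alpha s *: st_p s.

(* initial state after the j = 0 tests (M possibly updated with p_0) *)
Definition ccg_init : ccg_state := (0, g, - g, ccg_updM M0 (- g)).
Definition ccg_step (s : ccg_state) : ccg_state :=
  let a := ccg_alpha s in
  let y' := st_y s + a *: st_p s in
  let r' := st_r s + a *: (ccg_Hbar *m st_p s) in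
  let b := norm2 r' ^+ 2 / norm2 (st_r s) ^+ 2 in
  let p' := - r' + b *: st_p s in
  let M' := ccg_updM (ccg_updM (ccg_updM (st_M s) p') y') r' in
  (y', r', p', M').
Definition ccg_st (j : nat) : ccg_state := iter j ccg_step ccg_init.

Definition ccg_stops (j : nat) : bool :=
  let s := ccg_st j in
  [|| ccg_negc (st_y s),
      norm2 (st_r s) <= ccg_zhat (st_M s) * norm2 g,
      ccg_negc (st_p s) |
      norm2 (st_r s) >
        Num.sqrt (ccg_T (st_M s)) * Num.sqrt (ccg_tau (st_M s)) ^+ j * norm2 g].

(* output of the tests at iteration j; NC is encoded by true, SOL by false *)
Definition ccg_out (j : nat) (d : 'cV[R]_m) (nc : bool) : Prop :=
  let s := ccg_st j in
  if ccg_negc (st_y s) then d = st_y s /\ nc = true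
  else if norm2 (st_r s) <= ccg_zhat (st_M s) * norm2 g then d = st_y s /\ nc = false
  else if ccg_negc (st_p s) then d = st_p s /\ nc = true
  else if norm2 (st_r s) >
        Num.sqrt (ccg_T (st_M s)) * Num.sqrt (ccg_tau (st_M s)) ^+ j * norm2 g then
    exists i, (i < j)%N /\
      ccg_negc (ccg_ynext s - st_y (ccg_st i)) /\
      d = ccg_ynext s - st_y (ccg_st i) /\ nc = true
  else False.

Definition capped_cg (d : 'cV[R]_m) (nc : bool) : Prop :=
  (ccg_negc (- g) /\ d = - g /\ nc = true) \/
  (~~ ccg_negc (- g) /\
   exists j, (0 < j)%N /\ (forall j', (0 < j' < j)%N -> ~~ ccg_stops j') /\
             ccg_out j d nc).
End CappedCG.

Section Alg.
Variables (n : nat) (f : 'cV[R]_n -> R) (lam : R).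
Variables (epsg beta delta tauhat zeta etabar eta theta : R).

Definition epsh : R := Num.sqrt epsg.
Definition phi (x : 'cV[R]_n) : R := f x + lam * norm1 x.

Definition Gmap (t : R) (x : 'cV[R]_n) : 'cV[R]_n :=
  t *: (x - prox_l1 (lam / t) (x - t^-1 *: gradf f x)).

Definition I0 (x : 'cV[R]_n) : {set 'I_n} := [set i | `|x i 0| <= Num.sqrt epsg].
Definition Inz (x : 'cV[R]_n) : {set 'I_n} := [set i | `|x i 0| > Num.sqrt epsg].

Definition geps (x : 'cV[R]_n) : 'cV[R]_n :=
  \col_i (if x i 0 > Num.sqrt epsg then gradf f x i 0 + lam
          else if x i 0 < - Num.sqrt epsg then gradf f x i 0 - lam
          else gradf f x i 0 -
               Order.min (Order.max (- lam - powR epsg (3/4)) (gradf f x i 0))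
                         (lam + powR epsg (3/4))).

Definition sub_idx (S : {set 'I_n}) (i : 'I_#|S|) : 'I_n := enum_val i.
Definition subv (S : {set 'I_n}) (v : 'cV[R]_n) : 'cV[R]_#|S| :=
  \col_i v (sub_idx i) 0.
Definition subm (S : {set 'I_n}) (A : 'M[R]_n) : 'M[R]_#|S| :=
  \matrix_(i, j) A (sub_idx i) (sub_idx j).

Definition condPG (x : 'cV[R]_n) : bool :=
  (I0 x != finset.set0) && [exists i, (i \in I0 x) && (geps x i 0 != 0)].
Definition condNCG (x : 'cV[R]_n) : bool :=
  (Inz x != finset.set0) && (norm2 (subv (Inz x) (geps x)) != 0).

Definition pg_trial (x : 'cV[R]_n) (j : nat) : 'cV[R]_n :=
  prox_l1 (lam / beta ^+ j) (x - (beta ^+ j)^-1 *: gradf f x).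
Definition pg_accept (x : 'cV[R]_n) (j : nat) : bool :=
  phi (pg_trial x j) < phi x - etabar / beta ^+ j * norm2 (Gmap (beta ^+ j) x) ^+ 2.
Definition pg_step (x x' : 'cV[R]_n) : Prop :=
  exists jk : nat, pg_accept x jk /\ (forall j, (j < jk)%N -> ~~ pg_accept x j) /\
    x' = pg_trial x jk.

Definition ncg_step (x x' : 'cV[R]_n) : Prop :=
  let S := Inz x in
  let H := subm S (hessf f x) in
  let g := subv S (geps x) in
  exists (M tauk : R) (d : 'cV[R]_#|S|) (nc : bool) (dk : 'cV[R]_n),
    0 <= M /\
    2 * epsh / powR (norm2 g) delta <= tauk <= 2 * tauhat * epsh / powR (norm2 g) delta /\
    capped_cg H g epsh zeta delta tauk M d nc /\
    (forall i, i \notin S -> dk i 0 = 0) /\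
    subv S dk = (if nc then
                   (- sgn (dotv d g) * `|dotv d (H *m d)| / norm2 d ^+ 2 / norm2 d) *: d
                 else d) /\
    exists jk : nat,
      phi (x + theta ^+ jk *: dk) < phi x - eta * theta ^+ (2 * jk) * epsh * norm2 dk ^+ 2 /\
      (forall j, (j < jk)%N ->
         ~ (phi (x + theta ^+ j *: dk) < phi x - eta * theta ^+ (2 * j) * epsh * norm2 dk ^+ 2)) /\
      x' = x + theta ^+ jk *: dk.

(* {x^k} is generated by FPGN2CM from x0.  If neither branch applies at x^k
   the algorithm stops (no second-order phase), and later terms are unconstrained. *)
Definition fpgn2cm_seq (x0 : 'cV[R]_n) (x : nat -> 'cV[R]_n) : Prop :=
  x 0%N = x0 /\
  forall k : nat,
    if condPG (x k) then pg_step (x k) (x k.+1)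
    else if condNCG (x k) then ncg_step (x k) (x k.+1)
    else True.

(* iteration k is actually performed (the algorithm has not stopped at x^0..x^k) *)
Definition fpgn2cm_runs (x : nat -> 'cV[R]_n) (k : nat) : Prop :=
  forall j, (j <= k)%N -> condPG (x j) || condNCG (x j).
End Alg.
End FPGN2CM.

(* Main.v *)
Require Import Defs.
From mathcomp Require Import all_boot all_order all_algebra.
From mathcomp Require Import all_classical all_reals all_analysis.
From mathcomp Require Import ring lra.
Import Order.TTheory GRing.Theory Num.Theory.
Import numFieldNormedType.Exports.
Local Open Scope ring_scope.
Local Open Scope classical_set_scope.
Set Implicit Arguments. Unset Strict Implicit.

Definition soft (R : realType) (z c : R) : R :=
  if c < z then z - c else if z < - c then z + c else 0.

Lemma soft_vi (R : realType) (c z w : R) : 0 <= c ->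
  c * `|soft z c| - c * `|w| <= (soft z c - z) * (w - soft z c).
Proof.
move=> c0; rewrite /soft.
case: ltP => h1; [|case: ltP => h2].
- rewrite (ger0_norm (ltW _)) ?subr_gt0 //.
  case: (lerP 0 w) => hw; [rewrite (ger0_norm hw)|rewrite (ltr0_norm hw)]; nra.
- rewrite (ltr0_norm _); last by lra.
  case: (lerP 0 w) => hw; [rewrite (ger0_norm hw)|rewrite (ltr0_norm hw)]; nra.
- rewrite normr0 mulr0.
  case: (lerP 0 w) => hw; [rewrite (ger0_norm hw)|rewrite (ltr0_norm hw)]; nra.
Qed.

Lemma norm2_sq (R : realType) m (v : 'cV[R]_m) : norm2 v ^+ 2 = \sum_i v i 0 ^+ 2.
Proof. by rewrite /norm2 sqr_sqrtr // sumr_ge0 // => i _; rewrite sqr_ge0. Qed.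

Definition softv (R : realType) m (c : R) (z : 'cV[R]_m) : 'cV[R]_m :=
  \col_i soft (z i 0) c.

Lemma softv_strong (R : realType) m (c : R) (z w : 'cV[R]_m) : 0 <= c ->
  c * norm1 (softv c z) + norm2 (softv c z - z) ^+ 2 / 2 + norm2 (w - softv c z) ^+ 2 / 2
  <= c * norm1 w + norm2 (w - z) ^+ 2 / 2.
Proof.
move=> c0; rewrite !norm2_sq /norm1 !mulr_sumr !mulr_suml -!big_split /=.
apply: ler_sum => i _; rewrite !mxE.
have := soft_vi (z i 0) (w i 0) c0; nra.
Qed.

Lemma prox_softv (R : realType) m (c : R) (z : 'cV[R]_m) : 0 <= c ->
  prox_l1 c z = softv c z.
Proof.
move=> c0; rewrite /prox_l1.
have ex : exists u, [set u | is_prox_l1 c z u] u.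
  exists (softv c z) => w /=; have := softv_strong z w c0.
  have : 0 <= norm2 (w - softv c z) ^+ 2 / 2 by rewrite divr_ge0 // sqr_ge0.
  lra.
have := xgetPex 0 ex; set v := xget _ _ => /= hv.
have := softv_strong z v c0; have := hv (softv c z).
move=> h1 h2.
have h3 : \sum_i (v - softv c z) i 0 ^+ 2 <= 0 by rewrite -norm2_sq; lra.
have h4 : \sum_i (v - softv c z) i 0 ^+ 2 = 0.
  by apply/eqP; rewrite eq_le h3 sumr_ge0 // => i _; rewrite sqr_ge0.
apply/matrixP => i j; rewrite (ord1 j).
have := psumr_eq0P (fun k _ => sqr_ge0 ((v - softv c z) k 0)) h4.
move=> /(_ i erefl).
by rewrite !mxE => /eqP; rewrite sqrf_eq0 subr_eq0 => /eqP.
Qed.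

Lemma soft_G_lb (R : realType) (t lam a g : R) : 0 < t -> 0 <= lam ->
  `|g| - lam <= `|t * (a - soft (a - t^-1 * g) (lam / t))|.
Proof.
move=> t0 l0; set z := a - t^-1 * g; set c := lam / t.
have tz : t * z = t * a - g by rewrite /z mulrBr mulrA mulfV ?gt_eqF // mul1r.
have tc : t * c = lam by rewrite /c mulrC divfK ?gt_eqF.
rewrite /soft; case: ltP => h1; [|case: ltP => h2].
- have -> : t * (a - (z - c)) = g + lam by rewrite mulrBr mulrBr tz tc; lra.
  case: (lerP 0 g) => hg; [rewrite (ger0_norm hg)|rewrite (ltr0_norm hg)];
  case: (lerP 0 (g + lam)) => hg2; [rewrite (ger0_norm hg2)|rewrite (ltr0_norm hg2)|rewrite (ger0_norm hg2)|rewrite (ltr0_norm hg2)]; lra.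
- have -> : t * (a - (z + c)) = g - lam by rewrite mulrBr mulrDr tz tc; lra.
  case: (lerP 0 g) => hg; [rewrite (ger0_norm hg)|rewrite (ltr0_norm hg)];
  case: (lerP 0 (g - lam)) => hg2; [rewrite (ger0_norm hg2)|rewrite (ltr0_norm hg2)|rewrite (ger0_norm hg2)|rewrite (ltr0_norm hg2)]; lra.
- rewrite subr0.
  have hz1 : t * z <= t * c by rewrite ler_pM2l.
  have hz2 : - (t * c) <= t * z by rewrite -mulrN ler_pM2l.
  rewrite tz tc in hz1 hz2.
  case: (lerP 0 g) => hg; [rewrite (ger0_norm hg)|rewrite (ltr0_norm hg)];
  case: (lerP 0 (t * a)) => hg2; [rewrite (ger0_norm hg2)|rewrite (ltr0_norm hg2)|rewrite (ger0_norm hg2)|rewrite (ltr0_norm hg2)]; lra.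
Qed.

Lemma condPG_grad (R : realType) n (f : 'cV[R]_n -> R) (lam epsg : R) (y : 'cV[R]_n) :
  condPG f lam epsg y -> exists i, lam + powR epsg (3/4) < `|gradf f y i 0|.
Proof.
case/andP => _ /existsP [i /andP [hi hg]]; exists i.
move: hi hg; rewrite inE mxE => hi.
have [ha hb] : - Num.sqrt epsg <= y i 0 /\ y i 0 <= Num.sqrt epsg.
  by move: hi; rewrite ler_norml => /andP [].
have h1 : ~~ (Num.sqrt epsg < y i 0) by rewrite -leNgt.
have h2 : ~~ (y i 0 < - Num.sqrt epsg) by rewrite -leNgt.
rewrite (negbTE h1) (negbTE h2).
set e := powR epsg (3/4); set gi := gradf f y i 0.
rewrite ltNge; apply: contra => hle.
have [hl hr] : - (lam + e) <= gi /\ gi <= lam + e.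
  by move: hle; rewrite ler_norml => /andP [].
have -> : Order.max (- lam - e) gi = gi by apply/max_idPr; lra.
have -> : Order.min gi (lam + e) = gi by apply/min_idPl.
by rewrite subrr.
Qed.

Lemma sum_ge_term (R : realType) m (F : 'I_m -> R) i :
  (forall j, 0 <= F j) -> F i <= \sum_j F j.
Proof.
move=> h; rewrite (bigD1 i) //= lerDl; apply: sumr_ge0 => j _; exact: h.
Qed.

Lemma Gmap_lb (R : realType) n (f : 'cV[R]_n -> R) (lam epsg t : R) (y : 'cV[R]_n) :
  0 < lam -> 0 < t -> condPG f lam epsg y ->
  powR epsg (3/4) ^+ 2 < norm2 (Gmap f lam t y) ^+ 2.
Proof.
move=> l0 t0 /condPG_grad [i hi].
have e0 : 0 <= powR epsg (3/4) by apply: powR_ge0.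
rewrite norm2_sq.
have := @sum_ge_term _ _ (fun j => (Gmap f lam t y) j 0 ^+ 2) i (fun j => sqr_ge0 _).
move=> hs; apply: (lt_le_trans _ hs).
have := soft_G_lb (y i 0) (gradf f y i 0) t0 (ltW l0).
set G := t * _ => hG.
have -> : Gmap f lam t y i 0 = G.
  rewrite /Gmap prox_softv ?divr_ge0 ?ltW // /G mxE.
  by rewrite /softv /gradf !mxE.
have : powR epsg (3/4) < `|G| by lra.
rewrite -(real_normK (num_real G)).
set e := powR epsg (3/4) in e0 *; move=> h; rewrite !expr2; nra.
Qed.

Lemma diff_dot (R : realType) n (f : 'cV[R]_n -> R) (a v : 'cV[R]_n) :
  'd f a v = dotv (gradf f a) v.
Proof.
have Hv : v = \sum_i v i 0 *: (delta_mx i 0 : 'cV[R]_n).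
  rewrite {1}(matrix_sum_delta v); apply: eq_bigr => i _.
  by rewrite big_ord1.
rewrite {1}Hv linear_sum /dotv; apply: eq_bigr => i _.
by rewrite linearZ /= /gradf mxE mulrC.
Qed.

Lemma seg_derive (R : realType) n (f : 'cV[R]_n -> R) (y d : 'cV[R]_n) (r : R) :
  (forall z, differentiable f z) ->
  is_derive r 1 (fun s => f (y + s *: d)) (dotv (gradf f (y + r *: d)) d).
Proof.
move=> df.
have E : (fun s : R => s^-1 *: (((fun s => f (y + s *: d)) \o shift r) (s *: 1) - f (y + r *: d)))
  = (fun s => s^-1 *: ((f \o shift (y + r *: d)) (s *: d) - f (y + r *: d))).
  apply: funext => s /=; congr (_ *: (f _ - _)).
  by rewrite scalerDl /GRing.scale /= mulr1 addrCA addrC.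
have hd : derivable f (y + r *: d) d by apply: diff_derivable.
apply: DeriveDef.
  by rewrite /derivable E.
by rewrite /derive E -/(derive f _ _) deriveE // diff_dot.
Qed.

Lemma entry_le_norm (R : realType) m (x : 'cV[R]_m) i : `|x i 0| <= `|x|.
Proof.
rewrite [X in _ <= X]/Num.norm /= mx_normrE.
exact: (@le_bigmax _ _ _ 0 (fun ij : 'I_m * 'I_1 => `|x ij.1 ij.2|) (i, 0)).
Qed.

Lemma norm_sq_le (R : realType) m (x : 'cV[R]_m) : `|x| ^+ 2 <= \sum_i x i 0 ^+ 2.
Proof.
have [->|/mx_norm_neq0 [[i j] /= hi]] := eqVneq `|x| 0.
  by rewrite expr0n /= sumr_ge0 // => i _; rewrite sqr_ge0.
have -> : `|x| = `|x i 0| by rewrite [LHS]hi (ord1 j).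
rewrite (real_normK (num_real _)).
exact: (@sum_ge_term _ _ (fun k => x k 0 ^+ 2) i (fun k => sqr_ge0 _)).
Qed.

Lemma dotv_le (R : realType) m (w d : 'cV[R]_m) : dotv w d <= m%:R * `|w| * `|d|.
Proof.
rewrite /dotv; apply: le_trans (_ : \sum_(i < m) `|w| * `|d| <= _); last first.
  rewrite sumr_const card_ord.
  by rewrite -mulrA mulr_natl.
apply: ler_sum => i _; apply: le_trans (ler_norm _) _.
by rewrite normrM ler_pM // entry_le_norm.
Qed.

Lemma dotvB (R : realType) m (u v d : 'cV[R]_m) : dotv u d - dotv v d = dotv (u - v) d.
Proof. by rewrite /dotv -sumrB; apply: eq_bigr => i _; rewrite !mxE mulrBl. Qed.

Lemma h_cont (R : realType) n (f : 'cV[R]_n -> R) (y d : 'cV[R]_n) :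
  (forall z, differentiable f z) -> continuous (fun s : R => f (y + s *: d)).
Proof.
move=> df r; apply: differentiable_continuous; apply/derivable1_diffP.
by case: (seg_derive y d r df).
Qed.

Lemma desc (R : realType) n (f : 'cV[R]_n -> R) (U : set 'cV[R]_n) (L : R)
  (y d : 'cV[R]_n) (s : R) :
  (forall z, differentiable f z) ->
  (forall a b, U a -> U b -> `|gradf f a - gradf f b| <= L * `|a - b|) ->
  0 <= s -> (forall r, 0 <= r <= s -> U (y + r *: d)) ->
  f (y + s *: d) <= f y + s * dotv (gradf f y) d + n%:R * `|L| * s ^+ 2 * \sum_i d i 0 ^+ 2.
Proof.
move=> df HL s0 HU.
have [->|sp] := eqVneq s 0.
  by rewrite scale0r addr0 mul0r addr0 expr0n /= mulr0 mul0r addr0.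
have {sp}sp : 0 < s by rewrite lt_def sp s0.
have hct : {within `[0, s], continuous (fun s : R => f (y + s *: d))}.
  by apply: continuous_subspaceT; exact: h_cont.
have [c cin hc] := MVT sp (fun r _ => seg_derive y d r df) hct.
move: hc; rewrite /= scale0r addr0 subr0 => hc.
have [c0 cs] : 0 < c /\ c < s by move: cin; rewrite in_itv /= => /andP [].
set a := dotv (gradf f y) d.
set w := gradf f (y + c *: d) - gradf f y.
have hE : dotv (gradf f (y + c *: d)) d = a + dotv w d.
  by rewrite -dotvB /a [RHS]addrC subrK.
have Uc : U (y + c *: d) by apply: HU; rewrite ltW // ltW.
have U0 : U y by have := HU 0; rewrite scale0r addr0; apply; rewrite lexx.
have hw : `|w| <= `|L| * (c * `|d|).
  apply: le_trans (HL _ _ Uc U0) _.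
  rewrite addrC addKr normrZ (gtr0_norm c0).
  by apply: ler_wpM2r; [rewrite mulr_ge0 // ltW | apply: ler_norm].
have hdw := dotv_le w d.
have hN := norm_sq_le d.
set N := `|d| in hw hdw hN.
set D := \sum_i d i 0 ^+ 2 in hN *.
set K := `|L| in hw *.
have K0 : 0 <= K by apply: normr_ge0.
have N0 : 0 <= N by apply: normr_ge0.
have m0 : 0 <= n%:R :> R by apply: ler0n.
have e1 : dotv w d <= n%:R * (K * (c * N)) * N.
  apply: le_trans hdw _; apply: ler_wpM2r => //; apply: ler_wpM2l => //.
have e2 : dotv w d <= n%:R * K * s * D.
  apply: le_trans e1 _.
  have : c * N * N <= s * D.
    rewrite -mulrA; apply: ler_pM; [exact: ltW|exact: mulr_ge0|exact: ltW|by rewrite -expr2].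
  move=> h; rewrite -!mulrA; apply: ler_wpM2l => //; apply: ler_wpM2l => //.
  by rewrite mulrA.
have : f (y + s *: d) = f y + (a + dotv w d) * s by rewrite -hE -hc [RHS]addrC subrK.
move=> ->; rewrite expr2.
set A := f y; set B := dotv w d.
have : (dotv w d) * s <= n%:R * K * s * D * s by apply: ler_wpM2r => //; apply: ltW.
rewrite -/B => h; rewrite mulrDl.
have -> : n%:R * K * (s * s) * D = n%:R * K * s * D * s by rewrite !mulrA mulrAC.
lra.
Qed.

Lemma near_ball (R : realType) (P : R -> Prop) (s : R) :
  (\forall r \near s, P r) -> exists2 e, 0 < e & forall r, `|s - r| < e -> P r.
Proof.
move=> /nbhs_ballP [e e0 he]; exists e => // r hr; apply: he.
Qed.

Lemma real_cont_arg (R : realType) (P : R -> Prop) (G : R -> R) (c0 : R) :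
  continuous G ->
  (forall s, 0 <= s <= 1 -> (forall r, 0 <= r <= s -> P r) -> G s <= c0) ->
  (forall s, G s <= c0 -> \forall r \near s, P r) ->
  P 0 ->
  forall r, 0 <= r <= 1 -> P r.
Proof.
move=> Gc HA HB P0.
pose E := [set s : R | 0 <= s <= 1 /\ forall r, 0 <= r <= s -> P r].
have E0 : E 0 by split; [rewrite lexx ler01 | move=> r; rewrite -eq_le => /eqP <-].
have Eub : ubound E 1 by move=> s [/andP [_ ?] _].
have hs : has_sup E by split; [exists 0 | exists 1].
set ss := sup E.
have ss0 : 0 <= ss by apply: (sup_upper_bound hs).
have ss1 : ss <= 1 by apply: ge_sup => //; exists 0.
have F1 : forall r, 0 <= r < ss -> P r.
  move=> r /andP [r0 rs].
  have rs' : 0 < ss - r by rewrite subr_gt0.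
  have [e [_ Pe] he] := sup_adherent rs' hs.
  apply: Pe; rewrite r0 /=; move: he; rewrite /ss; lra.
have F2 : G ss <= c0.
  have [->|ssp] := eqVneq ss 0.
    by apply: HA; [rewrite lexx ler01 | move=> r; rewrite -eq_le => /eqP <-].
  have {ssp}ssp : 0 < ss by rewrite lt_def ssp ss0.
  rewrite leNgt; apply/negP => hlt.
  have [e e0 he] := near_ball (cvgr_gt (G ss) (Gc ss) c0 hlt).
  pose r := Num.max 0 (ss - e / 2).
  have r0 : 0 <= r by rewrite le_max lexx.
  have rss : r < ss by rewrite gt_max ssp /=; lra.
  have : G r <= c0.
    apply: HA; first by rewrite r0 /=; lra.
    by move=> r' /andP [r'0 r'r]; apply: F1; rewrite r'0 /=; lra.
  have : c0 < G r.
    apply: he; rewrite ger0_norm; last by lra.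
    have : ss - e / 2 <= r by rewrite le_max lexx orbT.
    lra.
  lra.
have [e e0 he] := near_ball (HB _ F2).
have F4 : ss = 1.
  apply/eqP; rewrite eq_le ss1 /= leNgt; apply/negP => hlt.
  pose r1 := Num.min 1 (ss + e / 2).
  have r1ss : ss < r1 by rewrite lt_min hlt /=; lra.
  have : E r1.
    split.
      rewrite le_min ler01 /=.
      have : r1 <= 1 by rewrite ge_min lexx.
      lra.
    move=> r /andP [r0 rr1]; have [rlt|rge] := ltP r ss.
      by apply: F1; rewrite r0.
    apply: he; rewrite ler0_norm; last by lra.
    have : r1 <= ss + e / 2 by rewrite ge_min lexx orbT.
    lra.
  move=> /(sup_upper_bound hs); rewrite -/ss; lra.
move=> r /andP [r0 r1]; have [rlt|rge] := ltP r ss.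
  by apply: F1; rewrite r0.
apply: he; have -> : r = ss by lra.
by rewrite subrr normr0.
Qed.

Lemma norm1_seg_cont (R : realType) n (y d : 'cV[R]_n) :
  continuous (fun r : R => norm1 (y + r *: d)).
Proof.
have hi : forall i, continuous (fun r : R => `|(y + r *: d) i 0|).
  move=> i r; rewrite /=.
  have -> : (fun r : R => `|(y + r *: d) i 0|) = (fun r => `|y i 0 + r * d i 0|).
    by apply: funext => r'; rewrite !mxE.
  apply: cvg_norm; apply: cvgD; first exact: cvg_cst.
  apply: cvgMl; exact: cvg_id.
rewrite /norm1.
elim: (index_enum _) => [|i s IH].
  have -> : (fun r : R => \sum_(i <- [::]) `|(y + r *: d) i 0|) = (fun=> 0).
    by apply: funext => r; rewrite big_nil.
  exact: cst_continuous.
have -> : (fun r : R => \sum_(j <- i :: s) `|(y + r *: d) j 0|) =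
   (fun r => `|(y + r *: d) i 0| + \sum_(j <- s) `|(y + r *: d) j 0|).
  by apply: funext => r; rewrite big_cons.
by move=> r; apply: cvgD; [exact: hi | exact: IH].
Qed.

Lemma norm1_convex (R : realType) n (y d : 'cV[R]_n) (s : R) : 0 <= s <= 1 ->
  norm1 (y + s *: d) <= norm1 y + s * (norm1 (y + d) - norm1 y).
Proof.
move=> /andP [s0 s1].
have -> : norm1 y + s * (norm1 (y + d) - norm1 y) = (1 - s) * norm1 y + s * norm1 (y + d).
  rewrite mulrBr mulrBl mul1r; lra.
rewrite /norm1 !mulr_sumr -big_split /=; apply: ler_sum => i _; rewrite !mxE.
have -> : y i 0 + s * d i 0 = (1 - s) * y i 0 + s * (y i 0 + d i 0).
  by rewrite mulrBl mul1r mulrDr addrA subrK.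
apply: le_trans (ler_normD _ _) _.
rewrite !normrM (ger0_norm s0) ger0_norm //; lra.
Qed.

Lemma phi_seg (R : realType) n (f : 'cV[R]_n -> R) (lam : R) (U : set 'cV[R]_n) (L : R)
  (y d : 'cV[R]_n) (t s : R) :
  (forall z, differentiable f z) ->
  (forall a b, U a -> U b -> `|gradf f a - gradf f b| <= L * `|a - b|) ->
  0 <= lam ->
  lam * (norm1 (y + d) - norm1 y) + dotv (gradf f y) d <= - (t * \sum_i d i 0 ^+ 2) ->
  0 <= s <= 1 -> (forall r, 0 <= r <= s -> U (y + r *: d)) ->
  phi f lam (y + s *: d) <= phi f lam y - s * t * \sum_i d i 0 ^+ 2
      + n%:R * `|L| * s ^+ 2 * \sum_i d i 0 ^+ 2.
Proof.
move=> df HL l0 VI hs HU.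
have s0 : 0 <= s by case/andP: hs.
have h1 := desc df HL s0 HU.
have h2 := norm1_convex y d hs.
rewrite /phi.
set D := \sum_i d i 0 ^+ 2 in VI h1 *.
set a := dotv (gradf f y) d in VI h1.
set N1 := norm1 (y + d) in VI h2.
set N0 := norm1 y in VI h1 h2 *.
set Ns := norm1 (y + s *: d) in h2 *.
set Q := n%:R * `|L| * s ^+ 2 * D in h1 *.
have h3 : lam * Ns <= lam * (N0 + s * (N1 - N0)) by apply: ler_wpM2l.
have h4 : s * (lam * (N1 - N0) + a) <= s * (- (t * D)) by apply: ler_wpM2l.
rewrite mulrDr in h3; rewrite mulrDr in h4.
have e : lam * (s * (N1 - N0)) = s * (lam * (N1 - N0)) by rewrite mulrCA.
rewrite e in h3.
have e2 : s * (- (t * D)) = - (s * t * D) by rewrite mulrN mulrA.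
rewrite e2 in h4.
lra.
Qed.

Lemma seg_ok (R : realType) n (f : 'cV[R]_n -> R) (lam : R) (U : set 'cV[R]_n) (L : R)
  (y d : 'cV[R]_n) (t c0 : R) :
  (forall z, differentiable f z) ->
  (forall a b, U a -> U b -> `|gradf f a - gradf f b| <= L * `|a - b|) ->
  open U -> (forall z, phi f lam z <= c0 -> U z) ->
  0 <= lam ->
  lam * (norm1 (y + d) - norm1 y) + dotv (gradf f y) d <= - (t * \sum_i d i 0 ^+ 2) ->
  n%:R * `|L| <= t -> phi f lam y <= c0 ->
  phi f lam (y + d) <= phi f lam y - (t - n%:R * `|L|) * \sum_i d i 0 ^+ 2.
Proof.
move=> df HL Uo SU l0 VI Kt yc.
set D := \sum_i d i 0 ^+ 2 in VI *.
set K := n%:R * `|L| in Kt *.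
have D0 : 0 <= D by apply: sumr_ge0 => i _; apply: sqr_ge0.
have K0 : 0 <= K by apply: mulr_ge0; [apply: ler0n | apply: normr_ge0].
have HA : forall s, 0 <= s <= 1 -> (forall r, 0 <= r <= s -> U (y + r *: d)) ->
    phi f lam (y + s *: d) <= c0.
  move=> s hs hU; have := phi_seg df HL l0 VI hs hU; rewrite -/D -/K => h.
  case/andP: hs => s0 s1.
  have : K * s ^+ 2 * D <= s * t * D.
    rewrite expr2 mulrA; apply: ler_wpM2r => //.
    rewrite mulrAC [s * t]mulrC; apply: ler_wpM2r => //.
    by apply: le_trans Kt; rewrite ler_piMr.
  rewrite -mulrA in h; lra.
have Gc : continuous (fun r : R => phi f lam (y + r *: d)).
  move=> r; apply: cvgD; first exact: h_cont.
  apply: cvgM; first exact: cvg_cst.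
  exact: norm1_seg_cont.
have HB : forall s, phi f lam (y + s *: d) <= c0 -> \forall r \near s, U (y + r *: d).
  move=> s hs.
  have nU : nbhs (y + s *: d) U by apply: open_nbhs_nbhs; split => //; apply: SU.
  have ct : (fun r : R => y + r *: d) @ s --> y + s *: d.
    apply: cvgD; first exact: cvg_cst.
    apply: cvgZl; exact: cvg_id.
  exact: ct _ nU.
have P0 : U (y + 0 *: d) by rewrite scale0r addr0; apply: SU.
have allU := real_cont_arg Gc HA HB P0.
have h01 : 0 <= (1:R) <= 1 by rewrite ler01 lexx.
have := phi_seg df HL l0 VI h01 (fun r hr => allU r hr).
rewrite scale1r expr1n !mul1r mulr1 -/D -/K => h.
rewrite mulrBl; lra.
Qed.

Lemma vi_scalar (R : realType) (l t yi gi : R) : 0 < t -> 0 <= l ->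
  l * `|soft (yi - t^-1 * gi) (l / t)| - l * `|yi| +
  gi * (soft (yi - t^-1 * gi) (l / t) - yi)
  <= - (t * (soft (yi - t^-1 * gi) (l / t) - yi) ^+ 2).
Proof.
move=> t0 l0.
set z := yi - t^-1 * gi; set c := l / t; set u := soft z c.
have tz : t * z = t * yi - gi by rewrite /z mulrBr mulrA mulfV ?gt_eqF // mul1r.
have tc : t * c = l by rewrite /c mulrC divfK ?gt_eqF.
have H := soft_vi z yi (divr_ge0 l0 (ltW t0)); rewrite -/c -/u in H.
have H2 := ler_wpM2l (ltW t0) H.
have e1 : t * (c * `|u| - c * `|yi|) = l * `|u| - l * `|yi|.
  by rewrite mulrBr !mulrA [t * l]mulrC mulfK ?gt_eqF.
have e2 : t * ((u - z) * (yi - u)) = (t * u - (t * yi - gi)) * (yi - u).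
  by rewrite mulrA; congr (_ * _); rewrite mulrBr tz.
rewrite e1 e2 in H2.
nra.
Qed.

Lemma vi_soft (R : realType) m (lam t : R) (y g : 'cV[R]_m) : 0 < t -> 0 <= lam ->
  lam * (norm1 (softv (lam / t) (y - t^-1 *: g)) - norm1 y)
   + dotv g (softv (lam / t) (y - t^-1 *: g) - y)
  <= - (t * \sum_i (softv (lam / t) (y - t^-1 *: g) - y) i 0 ^+ 2).
Proof.
move=> t0 l0.
rewrite /norm1 /dotv -sumrB mulr_sumr mulr_sumr -big_split /= -sumrN.
apply: ler_sum => i _; rewrite !mxE.
have := vi_scalar (y i 0) (g i 0) t0 l0.
rewrite mulrBr; lra.
Qed.

Lemma acc (R : realType) n (f : 'cV[R]_n -> R) (lam epsg beta etabar : R)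
  (U : set 'cV[R]_n) (L c0 : R) (y : 'cV[R]_n) (j : nat) :
  (forall z, differentiable f z) ->
  (forall a b, U a -> U b -> `|gradf f a - gradf f b| <= L * `|a - b|) ->
  open U -> (forall z, phi f lam z <= c0 -> U z) ->
  0 < lam -> 0 <= etabar -> etabar < 1 -> 0 < beta ^+ j ->
  n%:R * `|L| < beta ^+ j * (1 - etabar) ->
  condPG f lam epsg y -> phi f lam y <= c0 ->
  pg_accept f lam beta etabar y j.
Proof.
move=> df HL Uo SU l0 eta0 eta1 t0 Kt hPG yc.
set t := beta ^+ j in t0 Kt *.
have GL := Gmap_lb (t:=t) l0 t0 hPG.
rewrite /pg_accept /pg_trial -/t.
rewrite prox_softv; last by rewrite divr_ge0 // ltW.
set u := softv _ _.
set d := u - y.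
have VI := vi_soft y (gradf f y) t0 (ltW l0).
rewrite -/u -/d in VI.
have yd : y + d = u by rewrite /d addrC subrK.
rewrite -yd in VI.
set K := n%:R * `|L| in Kt.
have K0 : 0 <= K by apply: mulr_ge0; [apply: ler0n | apply: normr_ge0].
have Kt' : K <= t.
  have : t * (1 - etabar) <= t.
    by rewrite ler_piMr //; [exact: ltW | lra].
  lra.
have := seg_ok df HL Uo SU (ltW l0) VI Kt' yc.
rewrite yd => hphi.
have eG : norm2 (Gmap f lam t y) ^+ 2 = t ^+ 2 * \sum_i d i 0 ^+ 2.
  rewrite norm2_sq /Gmap prox_softv; last by rewrite divr_ge0 // ltW.
  rewrite -/u mulr_sumr; apply: eq_bigr => i _.
  by rewrite /d !mxE exprMn; congr (_ * _); rewrite -sqrrN opprB.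
rewrite eG; rewrite eG in GL.
set D := \sum_i d i 0 ^+ 2 in hphi GL *.
have e0 : 0 <= powR epsg (3/4) ^+ 2 by apply: sqr_ge0.
have D0 : 0 < D.
  have : 0 < t ^+ 2 * D by lra.
  by rewrite pmulr_rgt0 // exprn_gt0.
have -> : etabar / t * (t ^+ 2 * D) = etabar * t * D.
  by rewrite expr2 !mulrA -(mulrA etabar) mulVf ?gt_eqF // mulr1.
have : etabar * t * D < (t - K) * D.
  rewrite ltr_pM2r //; lra.
rewrite -/K in hphi; move=> h; lra.
Qed.

Lemma bernoulli (R : realType) (b : R) (J : nat) : 1 <= b -> 1 + J%:R * (b - 1) <= b ^+ J.
Proof.
move=> b1; elim: J => [|J IH]; first by rewrite mul0r addr0 expr0.
rewrite exprS -natr1 mulrDl mul1r.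
have h : b * (1 + J%:R * (b - 1)) <= b * b ^+ J by apply: ler_wpM2l => //; lra.
have J0 : 0 <= J%:R :> R by apply: ler0n.
have h2 : 0 <= J%:R * (b - 1) * (b - 1) by apply: mulr_ge0; [apply: mulr_ge0|]; lra.
have e : b * (1 + J%:R * (b - 1)) = b + J%:R * (b - 1) * (b - 1) + J%:R * (b - 1).
  by ring.
lra.
Qed.

Unset Implicit Arguments. Set Strict Implicit.

Theorem lemma12 (R : realType) (n : nat) (f : 'cV[R]_n -> R) (lam : R)
  (epsg beta delta tauhat zeta etabar eta theta : R)
  (x0 : 'cV[R]_n) (x : nat -> 'cV[R]_n) :
  0 < lam ->
  (* f is twice continuously differentiable *)
  (forall y, differentiable f y) ->
  (forall y, differentiable (gradf f) y) ->
  continuous (hessf f) ->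
  (* the level set L_phi(x0) is bounded *)
  bounded_set [set y | phi f lam y <= phi f lam x0] ->
  (* f is twice uniformly Lipschitz continuously differentiable on an open
     neighbourhood of L_phi(x0) *)
  (exists U : set 'cV[R]_n,
     open U /\ [set y | phi f lam y <= phi f lam x0] `<=` U /\
     exists L : R, forall y z, U y -> U z ->
       `|gradf f y - gradf f z| <= L * `|y - z| /\
       `|hessf f y - hessf f z| <= L * `|y - z|) ->
  (* phi has a minimizer *)
  (exists xs, forall y, phi f lam xs <= phi f lam y) ->
  (* algorithm parameters *)
  0 < epsg < 1 -> 1 < beta -> 0 <= delta <= 1 -> 1 <= tauhat ->
  0 < zeta < 1 -> 0 < etabar < 1 -> 0 < eta < (1 - zeta) / 2 -> 0 < theta < 1 ->
  fpgn2cm_seq f lam epsg beta delta tauhat zeta etabar eta theta x0 x ->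
  exists K : nat, forall k : nat, (K <= k)%N -> fpgn2cm_runs f lam epsg x k ->
    ~~ condPG f lam epsg (x k) && condNCG f lam epsg (x k).
Proof.
move=> l0 df _ _ _ [U [Uo [SU [L HL']]]] [xs hxs] /andP [e0 e1] b1 _ _ _
  /andP [et0 et1] /andP [eta0 _] /andP [th0 th1] [hx0 hseq].
have HL : forall a b, U a -> U b -> `|gradf f a - gradf f b| <= L * `|a - b|.
  by move=> a b Ua Ub; case: (HL' a b Ua Ub).
set c0 := phi f lam x0.
have SU' : forall z, phi f lam z <= c0 -> U z by move=> z hz; apply: SU.
set K := n%:R * `|L|.
have K0 : 0 <= K by apply: mulr_ge0; [apply: ler0n | apply: normr_ge0].
set q := (beta - 1) * (1 - etabar).
have q0 : 0 < q by apply: mulr_gt0; lra.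
set J := Num.Def.archi_bound (K / q).
have hJ : K < beta ^+ J * (1 - etabar).
  have h1 := archi_boundP (divr_ge0 K0 (ltW q0)); rewrite -/J in h1.
  have h2 : K < J%:R * q by rewrite -ltr_pdivrMr.
  have h3 := @bernoulli _ beta J (ltW b1).
  have h4 : (1 + J%:R * (beta - 1)) * (1 - etabar) <= beta ^+ J * (1 - etabar).
    by apply: ler_wpM2r => //; lra.
  rewrite /q in h2.
  have J0 : 0 <= J%:R :> R by apply: ler0n.
  nra.
have bJ0 : 0 < beta ^+ J by apply: exprn_gt0; lra.
set e2 := powR epsg (3/4) ^+ 2.
have e20 : 0 < e2 by apply: exprn_gt0; apply: powR_gt0.
set d0 := etabar * e2 / beta ^+ J.
have d00 : 0 < d0 by apply: divr_gt0 => //; apply: mulr_gt0.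
have STEP : forall k, condPG f lam epsg (x k) || condNCG f lam epsg (x k) ->
    phi f lam (x k) <= c0 ->
    phi f lam (x k.+1) <= phi f lam (x k) - d0 * (condPG f lam epsg (x k))%:R.
  move=> k hk hc; move: (hseq k).
  case hPG: (condPG f lam epsg (x k)) => /=.
    move=> [jk [hacc [hmin ->]]].
    have hjk : (jk <= J)%N.
      rewrite leqNgt; apply/negP => hJk; move: (hmin J hJk) => /negP; apply.
      exact: (acc df HL Uo SU' l0 (ltW et0) et1 bJ0 hJ hPG hc).
    have bjk0 : 0 < beta ^+ jk by apply: exprn_gt0; lra.
    have GL := Gmap_lb (t := beta ^+ jk) l0 bjk0 hPG; rewrite -/e2 in GL.
    have bb : beta ^+ jk <= beta ^+ J by apply: ler_weXn2l => //; apply: ltW.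
    have inv : (beta ^+ J)^-1 <= (beta ^+ jk)^-1 by rewrite lef_pV2 ?posrE.
    have : etabar / beta ^+ J * e2 <= etabar / beta ^+ jk * norm2 (Gmap f lam (beta ^+ jk) (x k)) ^+ 2.
      apply: ler_pM; [| exact: ltW | | exact: ltW].
        by apply: mulr_ge0; [apply: ltW | rewrite invr_ge0 ltW].
      by apply: ler_wpM2l => //; apply: ltW.
    have -> : d0 = etabar / beta ^+ J * e2 by rewrite /d0 mulrAC.
    rewrite /pg_accept in hacc; move=> h; rewrite mulr1; lra.
  case hNCG: (condNCG f lam epsg (x k)) => /=; last by rewrite hPG hNCG in hk.
  move=> [M [tk [d [nc [dk [_ [_ [_ [_ [_ [jk [hlt [_ ->]]]]]]]]]]]]].
  rewrite mulr0 subr0; apply: ltW; apply: (lt_le_trans hlt).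
  rewrite lerBlDr lerDl; apply: mulr_ge0; last exact: sqr_ge0.
  apply: mulr_ge0; last exact: sqrtr_ge0.
  by apply: mulr_ge0; [apply: ltW | apply: exprn_ge0; apply: ltW].
pose cnt N := (\sum_(0 <= j < N.+1) nat_of_bool (condPG f lam epsg (x j)))%N.
have BOUND : forall N, fpgn2cm_runs f lam epsg x N ->
    phi f lam (x N.+1) <= c0 - d0 * (cnt N)%:R /\ phi f lam (x N.+1) <= c0.
  elim=> [|N IH] hr.
    have hk := hr 0%N (leqnn 0).
    have hc : phi f lam (x 0%N) <= c0 by rewrite hx0.
    have := STEP 0%N hk hc; rewrite /cnt big_nat1 hx0 -/c0 => h; split => //.
    have : 0 <= d0 * (nat_of_bool (condPG f lam epsg (x 0%N)))%:R.
      by apply: mulr_ge0; [apply: ltW | apply: ler0n].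
    rewrite hx0; lra.
  have hr' : fpgn2cm_runs f lam epsg x N by move=> j hj; apply: hr; apply: leqW.
  have [IH1 IH2] := IH hr'.
  have := STEP N.+1 (hr _ (leqnn _)) IH2.
  rewrite /cnt big_nat_recr //= natrD -/(cnt N) => h.
  have : 0 <= d0 * (nat_of_bool (condPG f lam epsg (x N.+1)))%:R.
    by apply: mulr_ge0; [apply: ltW | apply: ler0n].
  have : 0 <= d0 * (cnt N)%:R by apply: mulr_ge0; [apply: ltW | apply: ler0n].
  rewrite mulrDr; split; lra.
apply: contrapT => hK.
have H : forall K1 : nat, exists k, (K1 <= k)%N /\ fpgn2cm_runs f lam epsg x k /\
    condPG f lam epsg (x k).
  move=> K1; apply: contrapT => nH; apply: hK; exists K1 => k Kk rk.
  have := rk k (leqnn k); case hp: (condPG f lam epsg (x k)) => /= h //.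
  by exfalso; apply: nH; exists k; rewrite hp.
have CNT : forall m, exists N, fpgn2cm_runs f lam epsg x N /\ (m <= cnt N)%N.
  elim=> [|m [N [rN hm]]].
    by have [k [_ [rk _]]] := H 0%N; exists k.
  have [k [Nk [rk pk]]] := H N.+1.
  exists k; split => //.
  have : (cnt N + 1 <= cnt k)%N.
    rewrite /cnt (@big_cat_nat _ _ _ N.+1 0 k.+1) //=; last by apply: leqW.
    by rewrite leq_add2l big_nat_recr //= pk addn1.
  move=> h; apply: leq_trans h; rewrite addn1 ltnS //.
have hxs0 : 0 <= (c0 - phi f lam xs) / d0.
  by apply: divr_ge0; [have := hxs x0; rewrite -/c0; lra | apply: ltW].
have hM := archi_boundP hxs0.
set M := Num.Def.archi_bound _ in hM.
have [N [rN hN]] := CNT M.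
have [B1 _] := BOUND N rN.
have := hxs (x N.+1).
have hMN : (M%:R : R) <= (cnt N)%:R by rewrite ler_nat.
have : c0 - phi f lam xs < d0 * M%:R by rewrite mulrC -ltr_pdivrMr.
have : d0 * M%:R <= d0 * (cnt N)%:R by apply: ler_wpM2l => //; apply: ltW.
lra.
Qed.
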